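(* Under the standing assumptions, writing (R1) for the condition $\mathscr{R}(A^*AB)=\mathscr{R}(B)$, the following hold. (33) $\{M^{(1,2,3)}\}\subseteq\{C^{-1}B^{(1)}A^{-1}\}$; and $\{M^{(1,2,3)}\}\supseteq\{C^{-1}B^{(1)}A^{-1}\}\Leftrightarrow\{M^{(1,2,3)}\}=\{C^{-1}B^{(1)}A^{-1}\}\Leftrightarrow r(B)=m$. (34) $\{M^{(1,2,3)}\}\subseteq\{C^{-1}B^{(1,2)}A^{-1}\}$; and $\{M^{(1,2,3)}\}\supseteq\{C^{-1}B^{(1,2)}A^{-1}\}\Leftrightarrow\{M^{(1,2,3)}\}=\{C^{-1}B^{(1,2)}A^{-1}\}\Leftrightarrow B=0$ or $r(B)=m$. (35) $\{M^{(1,2,3)}\}\cap\{C^{-1}B^{(1,3)}A^{-1}\}\neq\emptyset\Leftrightarrow\{M^{(1,2,3)}\}\subseteq\{C^{-1}B^{(1,3)}A^{-1}\}\Leftrightarrow$ (R1); and $\{M^{(1,2,3)}\}\supseteq\{C^{-1}B^{(1,3)}A^{-1}\}\Leftrightarrow\{M^{(1,2,3)}\}=\{C^{-1}B^{(1,3)}A^{-1}\}\Leftrightarrow$ (R1) and $r(B)=\min\{m,n\}$. (36) $\{M^{(1,2,3)}\}\cap\{C^{-1}B^{(1,4)}A^{-1}\}\neq\emptyset$; $\{M^{(1,2,3)}\}\supseteq\{C^{-1}B^{(1,4)}A^{-1}\}\Leftrightarrow r(B)=m$; $\{M^{(1,2,3)}\}\subseteq\{C^{-1}B^{(1,4)}A^{-1}\}\Leftrightarrow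 B=0$ or $r(B)=n$; $\{M^{(1,2,3)}\}=\{C^{-1}B^{(1,4)}A^{-1}\}\Leftrightarrow r(B)=m=n$. (37) $\{M^{(1,2,3)}\}\cap\{C^{-1}B^{(1,2,3)}A^{-1}\}\neq\emptyset\Leftrightarrow\{M^{(1,2,3)}\}=\{C^{-1}B^{(1,2,3)}A^{-1}\}\Leftrightarrow$ (R1). (38) $\{M^{(1,2,3)}\}\cap\{C^{-1}B^{(1,2,4)}A^{-1}\}\neq\emptyset$; $\{M^{(1,2,3)}\}\supseteq\{C^{-1}B^{(1,2,4)}A^{-1}\}\Leftrightarrow B=0$ or $r(B)=m$; $\{M^{(1,2,3)}\}\subseteq\{C^{-1}B^{(1,2,4)}A^{-1}\}\Leftrightarrow B=0$ or $r(B)=n$; $\{M^{(1,2,3)}\}=\{C^{-1}B^{(1,2,4)}A^{-1}\}\Leftrightarrow B=0$ or $r(B)=m=n$. (39) $\{M^{(1,2,3)}\}\cap\{C^{-1}B^{(1,3,4)}A^{-1}\}\neq\emptyset\Leftrightarrow$ (R1); $\{M^{(1,2,3)}\}\supseteq\{C^{-1}B^{(1,3,4)}A^{-1}\}\Leftrightarrow$ (R1) and $r(B)=\min\{m,n\}$; $\{M^{(1,2,3)}\}\subseteq\{C^{-1}B^{(1,3,4)}A^{-1}\}\Leftrightarrow B=0$ or ((R1) and $r(B)=n$); $\{M^{(1,2,3)}\}=\{C^{-1}B^{(1,3,4)}A^{-1}\}\Leftrightarrow$ (R1) and $r(B)=n$. (40) $C^{-1}B^\dagger A^{-1}\in\{M^{(1,2,3)}\}\Leftrightarrow$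 (R1).
   Context: Standing assumptions: $m,n\ge1$; $A\in\mathbb{C}^{m\times m}$ and $C\in\mathbb{C}^{n\times n}$ are nonsingular; $B\in\mathbb{C}^{m\times n}$; $M=ABC$. For a complex matrix $X$, $X^*$ is its conjugate transpose, $r(X)$ its rank and $\mathscr{R}(X)$ its column space. For $X\in\mathbb{C}^{p\times q}$, a matrix $G\in\mathbb{C}^{q\times p}$ is called an $\{i,\ldots,j\}$-generalized inverse of $X$ (written $X^{(i,\ldots,j)}$) if it satisfies the equations numbered $i,\ldots,j$ among the four Penrose equations (i) $XGX=X$, (ii) $GXG=G$, (iii) $(XG)^*=XG$, (iv) $(GX)^*=GX$; $\{X^{(i,\ldots,j)}\}$ denotes the set of all such $G$. The Moore–Penrose inverse $X^\dagger$ is the unique matrix satisfying all four equations. For a type $(k,\ldots,l)$, $\{C^{-1}B^{(k,\ldots,l)}A^{-1}\}:=\{C^{-1}GA^{-1}: G\in\{B^{(k,\ldots,l)}\}\}$. *)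

(* Defs.v *)
From HB Require Import structures.
From mathcomp Require Import all_boot all_order all_algebra.
Set Implicit Arguments. Unset Strict Implicit. Unset Printing Implicit Defensive.
Import Order.TTheory GRing.Theory Num.Theory.
Local Open Scope ring_scope.

(* The complex field C is generalised to an arbitrary
   numClosedFieldType R (e.g. algC), with complex conjugation Num.conj. *)

Definition ctmx (R : numClosedFieldType) p q (X : 'M[R]_(p, q)) : 'M[R]_(q, p) :=
  (map_mx Num.conj X)^T.

Definition penrose (R : numClosedFieldType) p q (i : nat)
    (X : 'M[R]_(p, q)) (G : 'M[R]_(q, p)) : Prop :=
  match i with
  | 1%N => X *m G *m X = X
  | 2%N => G *m X *m G = G
  | 3%N => ctmx (X *m G) = X *m G
  | 4%N => ctmx (G *m X) = G *m X
  | _ => True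
  end.

Definition ginv (R : numClosedFieldType) p q (idx : seq nat)
    (X : 'M[R]_(p, q)) (G : 'M[R]_(q, p)) : Prop :=
  forall i, i \in idx -> penrose i X G.

Definition tginv (R : numClosedFieldType) m n (idx : seq nat)
    (A : 'M[R]_m) (B : 'M[R]_(m, n)) (C : 'M[R]_n) (G : 'M[R]_(n, m)) : Prop :=
  exists G0, ginv idx B G0 /\ G = invmx C *m G0 *m invmx A.

Definition msubset T (P Q : T -> Prop) : Prop := forall x, P x -> Q x.
Definition mseteq T (P Q : T -> Prop) : Prop := forall x, P x <-> Q x.
Definition mmeets T (P Q : T -> Prop) : Prop := exists x, P x /\ Q x.

(* column space equality R(X) = R(Y), via row spaces of transposes *)
Definition colspace_eq (R : fieldType) m p q (X : 'M[R]_(m, p)) (Y : 'M[R]_(m, q)) : Prop :=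
  (X^T == Y^T)%MS.

(* Main.v *)
Require Import Defs.
From HB Require Import structures.
From Stdlib Require Import Setoid.
From mathcomp Require Import all_boot all_order all_algebra zify.
Set Implicit Arguments. Unset Strict Implicit. Unset Printing Implicit Defensive.
Import Order.TTheory GRing.Theory Num.Theory.
Local Open Scope ring_scope.

Ltac gintro := let i := fresh "i" in move=> i; rewrite !inE;
  repeat (case/orP; [move/eqP->|]); try move/eqP->.



Lemma ctmxM (R : numClosedFieldType) p q r (X : 'M[R]_(p,q)) (Y : 'M[R]_(q,r)) :
  ctmx (X *m Y) = ctmx Y *m ctmx X.
Proof. by rewrite /ctmx map_mxM trmx_mul. Qed.

Lemma ctmxD (R : numClosedFieldType) p q (X Y : 'M[R]_(p,q)) :
  ctmx (X + Y) = ctmx X + ctmx Y.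
Proof. by rewrite /ctmx map_mxD linearD. Qed.

Lemma ctmxN (R : numClosedFieldType) p q (X : 'M[R]_(p,q)) :
  ctmx (- X) = - ctmx X.
Proof. by rewrite /ctmx map_mxN linearN. Qed.

Lemma ctmxB (R : numClosedFieldType) p q (X Y : 'M[R]_(p,q)) :
  ctmx (X - Y) = ctmx X - ctmx Y.
Proof. by rewrite ctmxD ctmxN. Qed.

Lemma ctmxK (R : numClosedFieldType) p q (X : 'M[R]_(p,q)) :
  ctmx (ctmx X) = X.
Proof. by apply/matrixP=> i j; rewrite !mxE conjCK. Qed.

Lemma ctmx1 (R : numClosedFieldType) p : ctmx (1%:M : 'M[R]_p) = 1%:M.
Proof. by rewrite /ctmx map_mx1 trmx1. Qed.

Lemma ctmx0 (R : numClosedFieldType) p q : ctmx (0 : 'M[R]_(p,q)) = 0.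
Proof. by rewrite /ctmx map_mx0 trmx0. Qed.

Lemma ctmxZ (R : numClosedFieldType) p q a (X : 'M[R]_(p,q)) :
  ctmx (a *: X) = a^* *: ctmx X.
Proof. by rewrite /ctmx map_mxZ linearZ. Qed.

Lemma ctmx_eq0 (R : numClosedFieldType) p q (X : 'M[R]_(p,q)) :
  ctmx X *m X = 0 -> X = 0.
Proof.
move=> h; apply/matrixP=> i j.
have := congr1 (fun Z : 'M[R]_q => Z j j) h; rewrite !mxE => /eqP.
rewrite psumr_eq0.
  move=> /allP /(_ i (mem_index_enum _)) /implyP /(_ isT).
  by rewrite !mxE -[_ * _]mulrC -normCK sqrf_eq0 normr_eq0 => /eqP.
by move=> k _; rewrite !mxE mulrC -normCK exprn_ge0.
Qed.



Lemma gram_unit (R : numClosedFieldType) r q (G : 'M[R]_(r,q)) :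
  row_free G -> G *m ctmx G \in unitmx.
Proof.
move=> hG; rewrite -row_free_unit; apply: inj_row_free => v h.
have h1 : ctmx (ctmx (v *m G)) *m ctmx (v *m G) = 0.
  by rewrite ctmxK ctmxM !mulmxA -(mulmxA v) h mul0mx.
have := ctmx_eq0 h1 => /(congr1 (@ctmx _ _ _)); rewrite ctmxK ctmx0 => h2.
by apply: (row_free_inj hG); rewrite h2 mul0mx.
Qed.

Lemma herm_inv (R : numClosedFieldType) p (X : 'M[R]_p) :
  ctmx X = X -> X \in unitmx -> ctmx (invmx X) = invmx X.
Proof.
move=> hX hu.
have e : ctmx (invmx X) *m X = 1%:M by rewrite -{2}hX -ctmxM mulmxV // ctmx1.
by rewrite -[ctmx (invmx X)]mulmx1 -(mulmxV hu) mulmxA e mul1mx.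
Qed.

Lemma mp_gen (R : numClosedFieldType) p r q (F : 'M[R]_(p,r)) (G : 'M[R]_(r,q))
  (U V : 'M[R]_r) :
  (forall k (X : 'M[R]_(k,r)), X *m G *m ctmx G *m U = X) ->
  (forall k (X : 'M[R]_(k,r)), X *m V *m ctmx F *m F = X) ->
  ctmx U = U -> ctmx V = V ->
  ginv [:: 1; 2; 3; 4]%N (F *m G) (ctmx G *m U *m V *m ctmx F).
Proof.
move=> hG hF hU hV i; rewrite !inE => /or4P [] /eqP -> /=.
- by rewrite !mulmxA hG hF.
- by rewrite !mulmxA hF hG.
- by rewrite !mulmxA hG !ctmxM ctmxK hV !mulmxA.
- by rewrite !mulmxA hF !ctmxM ctmxK hU !mulmxA.
Qed.

Lemma mp_exists (R : numClosedFieldType) p q (B : 'M[R]_(p,q)) :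
  exists D, ginv [:: 1; 2; 3; 4]%N B D.
Proof.
set F := col_base B; set G := row_base B.
have hG : row_free G by apply: row_base_free.
have hrF : \rank F = \rank B.
  apply/eqP; rewrite eqn_leq rank_leq_col /=.
  by rewrite -{1}(mulmx_base B) mxrankM_maxl.
have hF : row_free (ctmx F).
  by rewrite /row_free /ctmx mxrank_tr mxrank_map hrF.
have hB : F *m G = B by apply: mulmx_base.
clearbody F G.
have uG := gram_unit hG.
have uF := gram_unit hF; rewrite ctmxK in uF.
exists (ctmx G *m invmx (G *m ctmx G) *m invmx (ctmx F *m F) *m ctmx F).
rewrite -{1}hB; apply: mp_gen.
- by move=> k X; rewrite -!mulmxA (mulmxA G) mulmxV // mulmx1.
- by move=> k X; rewrite -!mulmxA mulVmx // mulmx1.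
- by apply: herm_inv => //; rewrite ctmxM ctmxK.
- by apply: herm_inv => //; rewrite ctmxM ctmxK.
Qed.



Lemma sandwich (R : numClosedFieldType) p q r s (P : 'M[R]_(p,q)) (Q : 'M[R]_(r,s)) :
  (forall W : 'M[R]_(q,r), P *m W *m Q = 0) -> P = 0 \/ Q = 0.
Proof.
move=> hW.
case: (pickP (fun ij : 'I_p * 'I_q => P ij.1 ij.2 != 0)) => [[i j] /= hij|h0]; last first.
  by left; apply/matrixP=> i j; have := h0 (i, j); rewrite /= mxE => /negbFE/eqP.
right; apply/matrixP=> k l; rewrite mxE; apply/eqP; apply: contraT => hkl.
have := congr1 (fun Z : 'M[R]_(p,s) => Z i l) (hW (delta_mx j k)).
rewrite -(mul_delta_mx (0 : 'I_1)) mulmxA -colE -mulmxA -rowE mxE big_ord1 !mxE.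
by move/eqP; rewrite mulf_eq0 (negPf hij) (negPf hkl).
Qed.

Lemma herm_aff (R : numClosedFieldType) p q r (Z0 : 'M[R]_p) (P : 'M[R]_(p,q)) (Q : 'M[R]_(r,p)) :
  (forall V : 'M[R]_(q,r), ctmx (Z0 + P *m V *m Q) = Z0 + P *m V *m Q) -> P = 0 \/ Q = 0.
Proof.
move=> h; apply: sandwich => V.
have h0 := h 0; rewrite mulmx0 mul0mx addr0 in h0.
have hK : forall W : 'M[R]_(q,r), ctmx (P *m W *m Q) = P *m W *m Q.
  by move=> W; have := h W; rewrite ctmxD h0 => /addrI.
have := hK ('i *: V); rewrite -scalemxAr -scalemxAl ctmxZ hK conjCi.
move/eqP; rewrite -subr_eq0 -scalerBl scaler_eq0 -opprD oppr_eq0 => /orP [|/eqP //].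
by rewrite -mulr2n mulrn_eq0 /= (negPf (neq0Ci R)).
Qed.

Lemma const1_neq0 (R : numClosedFieldType) p q : (0 < p)%N -> (0 < q)%N ->
  (const_mx 1 : 'M[R]_(p,q)) != 0.
Proof.
case: p => // p; case: q => // q _ _; apply/eqP => /matrixP /(_ ord0 ord0).
by rewrite !mxE; move/eqP; rewrite oner_eq0.
Qed.



Lemma rankm_BX (F : fieldType) m n (B : 'M[F]_(m,n)) X :
  B *m X *m B = B -> \rank B = m -> B *m X = 1%:M.
Proof.
move=> h1 hr; have /row_freeP [Rr hR] : row_free B by rewrite /row_free hr.
by rewrite -[B *m X]mulmx1 -hR mulmxA h1.
Qed.

Lemma BX_rankm (F : fieldType) m n (B : 'M[F]_(m,n)) X :
  B *m X = 1%:M -> \rank B = m.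
Proof.
move=> h; apply/eqP; rewrite eqn_leq rank_leq_row /=.
by rewrite -{1}(mxrank1 F m) -h mxrankM_maxl.
Qed.

Lemma rankn_XB (F : fieldType) m n (B : 'M[F]_(m,n)) X :
  B *m X *m B = B -> \rank B = n -> X *m B = 1%:M.
Proof.
move=> h1 hr; have /row_fullP [L hL] : row_full B by rewrite /row_full hr.
by rewrite -[X *m B]mul1mx -hL -!mulmxA (mulmxA B) h1 hL.
Qed.

Lemma XB_rankn (F : fieldType) m n (B : 'M[F]_(m,n)) X :
  X *m B = 1%:M -> \rank B = n.
Proof.
move=> h; apply/eqP; rewrite eqn_leq rank_leq_col /=.
by rewrite -{1}(mxrank1 F n) -h mxrankM_maxr.
Qed.

Lemma rank0 (F : fieldType) m n (B : 'M[F]_(m,n)) : \rank B = 0%N -> B = 0.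
Proof. by move/eqP; rewrite mxrank_eq0 => /eqP. Qed.

Lemma ginv_sub (R : numClosedFieldType) p q (B : 'M[R]_(p,q)) X (i1 i2 : seq nat) :
  {subset i1 <= i2} -> ginv i2 B X -> ginv i1 B X.
Proof. by move=> hs h i hi; apply: h; apply: hs. Qed.



Definition Nm (R : numClosedFieldType) m (A : 'M[R]_m) := ctmx A *m A.
Definition SS (R : numClosedFieldType) m n (A : 'M[R]_m) (B : 'M[R]_(m,n)) (X : 'M[R]_(n,m)) :=
  B *m X *m B = B /\ X *m B *m X = X /\ ctmx (Nm A *m (B *m X)) = Nm A *m (B *m X).
Definition R1p (R : numClosedFieldType) m n (A : 'M[R]_m) (B : 'M[R]_(m,n)) D :=
  ctmx (Nm A *m (B *m D)) = Nm A *m (B *m D).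

Lemma Nm_herm (R : numClosedFieldType) m (A : 'M[R]_m) : ctmx (Nm A) = Nm A.
Proof. by rewrite /Nm ctmxM ctmxK. Qed.

Lemma ctmx_unit (R : numClosedFieldType) m (A : 'M[R]_m) :
  A \in unitmx -> ctmx A \in unitmx.
Proof.
move=> hA; have : ctmx A *m ctmx (invmx A) = 1%:M by rewrite -ctmxM mulVmx // ctmx1.
by case/mulmx1_unit.
Qed.

Lemma Nm_unit (R : numClosedFieldType) m (A : 'M[R]_m) : A \in unitmx -> Nm A \in unitmx.
Proof. by move=> hA; rewrite /Nm unitmx_mul ctmx_unit. Qed.

Lemma unit_cancel (R : numClosedFieldType) m p (N : 'M[R]_m) (X Y : 'M[R]_(m,p)) :
  N \in unitmx -> N *m X = N *m Y -> X = Y.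
Proof. by move=> hN h; rewrite -(mulKmx hN X) h mulKmx. Qed.



Lemma uniq13 (R : numClosedFieldType) m n (B : 'M[R]_(m,n)) X D :
  B *m X *m B = B -> ctmx (B *m X) = B *m X ->
  B *m D *m B = B -> ctmx (B *m D) = B *m D -> B *m X = B *m D.
Proof.
move=> h1X h3X h1D h3D.
have e1 : B *m X = B *m D *m (B *m X) by rewrite mulmxA h1D.
rewrite e1 -{1}h3D -{1}h3X -ctmxM mulmxA h1X h3D //.
Qed.

Lemma uniqS (R : numClosedFieldType) m n (A : 'M[R]_m) (B : 'M[R]_(m,n)) X Y :
  A \in unitmx -> SS A B X -> SS A B Y -> B *m X = B *m Y.
Proof.
move=> hA [hX1 [hX2 hX3]] [hY1 [hY2 hY3]].
set K := B *m X in hX3 *; set K' := B *m Y in hY3 *.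
have e1 : K' *m K = K by rewrite /K /K' mulmxA hY1.
have e2 : K *m K' = K' by rewrite /K /K' mulmxA hX1.
have hNK : ctmx K *m Nm A = Nm A *m K by rewrite -hX3 ctmxM Nm_herm.
have hNK' : ctmx K' *m Nm A = Nm A *m K' by rewrite -hY3 ctmxM Nm_herm.
apply: (unit_cancel (Nm_unit hA)); apply/esym.
rewrite -e2 mulmxA -hNK -mulmxA -hNK' mulmxA -ctmxM e1 hNK //.
Qed.





Lemma E_good (R : numClosedFieldType) m n (A : 'M[R]_m) (B : 'M[R]_(m,n)) Ed :
  A \in unitmx -> ginv [:: 1; 2; 3; 4]%N (A *m B) Ed ->
  SS A B (Ed *m A) /\ ginv [:: 1; 2; 4]%N B (Ed *m A).
Proof.
move=> hA hE.
have /= h1 := hE 1%N isT; have /= h2 := hE 2%N isT.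
have /= h3 := hE 3%N isT; have /= h4 := hE 4%N isT.
rewrite !mulmxA in h1 h2 h4 *.
have p1 : B *m (Ed *m A) *m B = B.
  by apply: (unit_cancel hA); rewrite !mulmxA h1.
have p2 : Ed *m A *m B *m (Ed *m A) = Ed *m A by rewrite !mulmxA h2.
split; first split => //; first split => //.
  have e : Nm A *m (B *m (Ed *m A)) = ctmx A *m (A *m B *m Ed) *m A by rewrite /Nm !mulmxA.
  by rewrite e ctmxM ctmxM ctmxK h3 !mulmxA.
by gintro => //=; rewrite !mulmxA h4.

Qed.





Lemma K4 (R : numClosedFieldType) m n (A : 'M[R]_m) (B : 'M[R]_(m,n)) D :
  A \in unitmx -> ginv [:: 1; 2; 3; 4]%N B D ->
  (forall X, ginv [:: 1; 2; 4]%N B X -> SS A B X) -> B = 0 \/ \rank B = m.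
Proof.
move=> hA hD hS.
have /= d1 := hD 1%N isT; have /= d2 := hD 2%N isT.
have /= d3 := hD 3%N isT; have /= d4 := hD 4%N isT.
have hPB : (1%:M - B *m D) *m B = 0 by rewrite mulmxBl mul1mx d1 subrr.
pose X (Y : 'M[R]_(n,m)) := D + D *m B *m Y *m (1%:M - B *m D).
have eBX : forall Y, B *m X Y = B *m D + B *m Y *m (1%:M - B *m D).
  by move=> Y; rewrite /X mulmxDr !mulmxA d1.
have eXB : forall Y, X Y *m B = D *m B.
  by move=> Y; rewrite /X mulmxDl -(mulmxA _ (1%:M - _)) hPB mulmx0 addr0.
have hX : forall Y, ginv [:: 1; 2; 4]%N B (X Y).
  move=> Y; gintro => /=.
  - by rewrite eBX mulmxDl d1 -mulmxA hPB mulmx0 addr0.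
  - by rewrite eXB /X mulmxDr d2 !mulmxA d2.

  - by rewrite eXB d4.
have := herm_aff (Z0 := Nm A *m (B *m D)) (P := Nm A *m B) (Q := 1%:M - B *m D).
case.
- move=> V; have [_ [_ h3]] := hS _ (hX V).
  by move: h3; rewrite eBX mulmxDr !mulmxA.
- move=> h; left; apply: (unit_cancel (Nm_unit hA)); by rewrite h mulmx0.
- move/eqP; rewrite subr_eq0 => /eqP h; right; apply: (BX_rankm (X := D)); by rewrite h.
Qed.





Lemma absorb (R : numClosedFieldType) m n (B : 'M[R]_(m,n)) E :
  B *m E *m B = B -> forall k (Z : 'M[R]_(k,m)), Z *m B *m E *m B = Z *m B.
Proof. by move=> h k Z; rewrite -!mulmxA (mulmxA B) h. Qed.

Lemma K10 (R : numClosedFieldType) m n (A : 'M[R]_m) (B : 'M[R]_(m,n)) D :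
  ginv [:: 1; 2; 3; 4]%N B D ->
  (forall X, ginv [:: 1; 3; 4]%N B X -> SS A B X) -> \rank B = m \/ \rank B = n.
Proof.
move=> hD hS.
have /= d1 := hD 1%N isT; have /= d2 := hD 2%N isT.
have /= d3 := hD 3%N isT; have /= d4 := hD 4%N isT.
have hPB : (1%:M - B *m D) *m B = 0 by rewrite mulmxBl mul1mx d1 subrr.
have hBQ : B *m (1%:M - D *m B) = 0 by rewrite mulmxBr mulmx1 mulmxA d1 subrr.
have hQQ : D *m B *m (1%:M - D *m B) = 0 by rewrite mulmxBr mulmx1 mulmxA d2 subrr.
pose X (W : 'M[R]_(n,m)) := D + (1%:M - D *m B) *m W *m (1%:M - B *m D).
have eBX : forall W, B *m X W = B *m D.
  by move=> W; rewrite /X (mulmxDr B) !mulmxA hBQ !mul0mx addr0.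
have eXB : forall W, X W *m B = D *m B.
  by move=> W; rewrite /X (mulmxDl D) -(mulmxA _ (1%:M - _)) hPB mulmx0 addr0.
have hX : forall W, ginv [:: 1; 3; 4]%N B (X W).
  by move=> W; gintro => /=; rewrite ?eBX ?eXB.
have hz : forall W, (1%:M - D *m B) *m W *m (1%:M - B *m D) = 0.
  move=> W; have [_ [h2 _]] := hS _ (hX W).
  move: h2; rewrite eXB /X (mulmxDr (D *m B)) d2 !mulmxA hQQ !mul0mx addr0.
  by move/(congr1 (fun Z => Z - D)); rewrite subrr addrC addKr.
case: (sandwich hz) => /eqP; rewrite subr_eq0 => /eqP h.
  by right; apply: (XB_rankn (X := D)); rewrite -h.
by left; apply: (BX_rankm (X := D)); rewrite -h.
Qed.

Lemma K11 (R : numClosedFieldType) m n (A : 'M[R]_m) (B : 'M[R]_(m,n)) :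
  A \in unitmx ->
  (forall X, SS A B X -> ginv [:: 1; 4]%N B X) -> B = 0 \/ \rank B = n.
Proof.
move=> hA hT.
have [Ed hEd] := mp_exists (A *m B).
have [[e1 [e2 e3]] hTE] := E_good hA hEd.
set E := Ed *m A in e1 e2 e3 hTE *; clearbody E.
have /= e4 := hTE 4%N isT.
have hBQ : B *m (1%:M - E *m B) = 0 by rewrite mulmxBr mulmx1 mulmxA e1 subrr.
have aE := absorb e1.
pose X (V : 'M[R]_(n,m)) := E + (1%:M - E *m B) *m V *m (B *m E).
have eBX : forall V, B *m X V = B *m E.
  by move=> V; rewrite /X (mulmxDr B) !mulmxA hBQ !mul0mx addr0.
have hX : forall V, SS A B (X V).
  move=> V; split; first by rewrite eBX.
  split; last by rewrite eBX.
  rewrite -(mulmxA (X V)) eBX /X (mulmxDl E) !mulmxA e2 aE //.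
have := herm_aff (Z0 := E *m B) (P := 1%:M - E *m B) (Q := B).
case.
- move=> V; have /= h4 := hT _ (hX V) 4%N isT.
  by move: h4; rewrite /X (mulmxDl E) !mulmxA aE.
- by move/eqP; rewrite subr_eq0 => /eqP h; right; apply: (XB_rankn (X := E)); rewrite -h.
- by left.
Qed.





Lemma K2 (R : numClosedFieldType) m n (A : 'M[R]_m) (B : 'M[R]_(m,n)) X :
  \rank B = m -> ginv [:: 1]%N B X -> SS A B X.
Proof.
move=> hr hX; have /= h1 := hX 1%N isT; have e := rankm_BX h1 hr.
by split=> //; split; [rewrite -mulmxA e mulmx1 | rewrite e mulmx1 Nm_herm].
Qed.

Lemma K3 (R : numClosedFieldType) m n (A : 'M[R]_m) (B : 'M[R]_(m,n)) X :
  B = 0 -> ginv [:: 1; 2]%N B X -> SS A B X.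
Proof.
move=> hB hX; have /= h2 := hX 2%N isT; subst B.
by split; [rewrite mulmx0 | split => //; rewrite mul0mx mulmx0 ctmx0].
Qed.

Lemma K0 (R : numClosedFieldType) m n (B : 'M[R]_(m,n)) X :
  B = 0 -> ginv [:: 1; 3; 4]%N B X.
Proof. by move=> ->; gintro => /=; rewrite ?mulmx0 ?mul0mx ?ctmx0. Qed.

Lemma K12 (R : numClosedFieldType) m n (A : 'M[R]_m) (B : 'M[R]_(m,n)) X :
  B = 0 \/ \rank B = n -> SS A B X -> ginv [:: 1; 4]%N B X.
Proof.
case=> [hB _|hr [h1 _]]; first by apply: (ginv_sub _ (K0 X hB)) => i; rewrite !inE => /orP[]->; rewrite ?orbT.
have e := rankn_XB h1 hr.
by gintro => //=; rewrite e ctmx1.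
Qed.


Lemma K6 (R : numClosedFieldType) m n (A : 'M[R]_m) (B : 'M[R]_(m,n)) D X :
  ginv [:: 1; 2; 3; 4]%N B D -> SS A B X -> ginv [:: 1; 3]%N B X -> R1p A B D.
Proof.
move=> hD [_ [_ h3]] hX.
have /= d1 := hD 1%N isT; have /= d3 := hD 3%N isT.
have /= x1 := hX 1%N isT; have /= x3 := hX 3%N isT.
by rewrite /R1p -(uniq13 x1 x3 d1 d3).
Qed.

Lemma K7 (R : numClosedFieldType) m n (A : 'M[R]_m) (B : 'M[R]_(m,n)) D :
  ginv [:: 1; 2; 3; 4]%N B D -> R1p A B D -> SS A B D.
Proof.
move=> hD hR.
have /= d1 := hD 1%N isT; have /= d2 := hD 2%N isT.
by split.
Qed.

Lemma K7b (R : numClosedFieldType) m n (A : 'M[R]_m) (B : 'M[R]_(m,n)) D X :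
  A \in unitmx -> ginv [:: 1; 2; 3; 4]%N B D -> R1p A B D -> SS A B X ->
  ginv [:: 1; 2; 3]%N B X.
Proof.
move=> hA hD hR hX.
have /= d3 := hD 3%N isT.
have e := uniqS hA hX (K7 hD hR).
case: hX => [h1 [h2 _]].
by gintro => //=; rewrite e.
Qed.

Lemma K8 (R : numClosedFieldType) m n (A : 'M[R]_m) (B : 'M[R]_(m,n)) D X :
  ginv [:: 1; 2; 3; 4]%N B D -> R1p A B D -> ginv [:: 1; 2; 3]%N B X -> SS A B X.
Proof.
move=> hD hR hX.
have /= d1 := hD 1%N isT; have /= d3 := hD 3%N isT.
have /= x1 := hX 1%N isT; have /= x2 := hX 2%N isT; have /= x3 := hX 3%N isT.
have e := uniq13 x1 x3 d1 d3.
by split=> //; split=> //; rewrite e.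
Qed.

Lemma K9 (R : numClosedFieldType) m n (A : 'M[R]_m) (B : 'M[R]_(m,n)) D X :
  ginv [:: 1; 2; 3; 4]%N B D -> R1p A B D -> \rank B = m \/ \rank B = n ->
  ginv [:: 1; 3]%N B X -> SS A B X.
Proof.
move=> hD hR hr hX.
have /= d1 := hD 1%N isT; have /= d3 := hD 3%N isT.
have /= x1 := hX 1%N isT; have /= x3 := hX 3%N isT.
have e := uniq13 x1 x3 d1 d3.
split=> //; split; last by rewrite e.
case: hr => hr.
  by rewrite -mulmxA (rankm_BX x1 hr) mulmx1.
by rewrite (rankn_XB x1 hr) mul1mx.
Qed.

Lemma R1E (R : numClosedFieldType) m n (A : 'M[R]_m) (B : 'M[R]_(m,n)) D :
  A \in unitmx -> ginv [:: 1; 2; 3; 4]%N B D ->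
  colspace_eq (ctmx A *m A *m B) B <-> R1p A B D.
Proof.
move=> hA hD.
have /= d1 := hD 1%N isT; have /= d3 := hD 3%N isT.
have hN := Nm_unit hA.
rewrite /colspace_eq -/(Nm A) /R1p; split.
  case/andP => /submxP [Z hZ] _.
  have eNB : Nm A *m B = B *m Z^T by rewrite -[Nm A *m B]trmxK hZ trmx_mul trmxK.
  have e : B *m D *m (Nm A *m (B *m D)) = Nm A *m (B *m D).
    by rewrite (mulmxA (Nm A)) eNB !mulmxA d1.
  by rewrite -e ctmxM ctmxM d3 Nm_herm !mulmxA.
move=> hR.
have e : B *m D *m Nm A = Nm A *m (B *m D) by rewrite -hR ctmxM Nm_herm d3.
have e2 : invmx (Nm A) *m (B *m D) = B *m D *m invmx (Nm A).
  apply: (unit_cancel hN); rewrite mulKVmx // mulmxA -e -mulmxA mulmxV //.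
  by rewrite mulmx1.
apply/andP; split; apply/submxP.
  exists (D *m Nm A *m B)^T; rewrite -trmx_mul; congr (_^T).
  by rewrite -{1}d1 !mulmxA -(mulmxA (Nm A) B D) -e !mulmxA.
exists (D *m invmx (Nm A) *m B)^T; rewrite -trmx_mul; congr (_^T).
rewrite {1}(_ : B = Nm A *m (invmx (Nm A) *m (B *m D) *m B)); last first.
  by rewrite -mulmxA d1 mulKVmx.
by rewrite e2 !mulmxA.
Qed.



Lemma tr_sub T U (f : T -> U) (g : U -> T) (P Q : T -> Prop) (P' Q' : U -> Prop) :
  (forall x, P x <-> P' (f x)) -> (forall x, Q x <-> Q' (f x)) -> (forall y, f (g y) = y) ->
  msubset P Q <-> msubset P' Q'.
Proof.
move=> hP hQ fg; split=> h y.
  by rewrite -(fg y) -hP -hQ; apply: h.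
by rewrite hP hQ; apply: h.
Qed.

Lemma tr_eq T U (f : T -> U) (g : U -> T) (P Q : T -> Prop) (P' Q' : U -> Prop) :
  (forall x, P x <-> P' (f x)) -> (forall x, Q x <-> Q' (f x)) -> (forall y, f (g y) = y) ->
  mseteq P Q <-> mseteq P' Q'.
Proof.
move=> hP hQ fg; split=> h y.
  by rewrite -(fg y) -hP -hQ; apply: h.
by rewrite hP hQ; apply: h.
Qed.

Lemma tr_meet T U (f : T -> U) (g : U -> T) (P Q : T -> Prop) (P' Q' : U -> Prop) :
  (forall x, P x <-> P' (f x)) -> (forall x, Q x <-> Q' (f x)) -> (forall y, f (g y) = y) ->
  mmeets P Q <-> mmeets P' Q'.
Proof.
move=> hP hQ fg; split=> [[x [h1 h2]]|[y [h1 h2]]].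
  by exists (f x); rewrite -hP -hQ.
by exists (g y); rewrite hP hQ fg.
Qed.

Lemma cancel2 (R : numClosedFieldType) m n (A : 'M[R]_m) (C : 'M[R]_n) (Y Z : 'M[R]_(m,n)) :
  A \in unitmx -> C \in unitmx -> A *m Y *m C = A *m Z *m C -> Y = Z.
Proof.
move=> hA hC h; apply: (unit_cancel hA).
by rewrite -(mulmxK hC (A *m Y)) h mulmxK.
Qed.

Lemma herm_conj (R : numClosedFieldType) m (A K : 'M[R]_m) :
  A \in unitmx ->
  (ctmx (A *m K *m invmx A) = A *m K *m invmx A <-> ctmx (Nm A *m K) = Nm A *m K).
Proof.
move=> hA.
have c1 : ctmx A *m ctmx (invmx A) = 1%:M by rewrite -ctmxM mulVmx // ctmx1.
have c2 : ctmx (invmx A) *m ctmx A = 1%:M by rewrite -ctmxM mulmxV // ctmx1.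
rewrite [ctmx (Nm A *m K)]ctmxM Nm_herm /Nm !ctmxM; split => h.
  have := congr1 (fun Z => ctmx A *m Z *m A) h.
  by rewrite !mulmxA c1 mul1mx mulmxKV // -!mulmxA.
have := congr1 (fun Z => ctmx (invmx A) *m Z *m invmx A) h.
by rewrite !mulmxA c2 mul1mx mulmxK //.
Qed.





Lemma T_iff (R : numClosedFieldType) m n (A : 'M[R]_m) (B : 'M[R]_(m,n)) (C : 'M[R]_n) idx G :
  A \in unitmx -> C \in unitmx ->
  tginv idx A B C G <-> ginv idx B (C *m G *m A).
Proof.
move=> hA hC; split.
  by case=> G0 [h ->]; rewrite !mulmxA mulmxV // mul1mx mulmxKV.
move=> h; exists (C *m G *m A); split => //.
by rewrite !mulmxA mulVmx // mul1mx mulmxK.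
Qed.

Lemma ginv123E (R : numClosedFieldType) p q (B : 'M[R]_(p,q)) X :
  ginv [:: 1; 2; 3]%N B X <-> [/\ penrose 1 B X, penrose 2 B X & penrose 3 B X].
Proof.
split; first by move=> h; split; apply: h.
by case=> h1 h2 h3; gintro.
Qed.

Lemma S_iffX (R : numClosedFieldType) m n (A : 'M[R]_m) (B : 'M[R]_(m,n)) (C : 'M[R]_n) X :
  A \in unitmx -> C \in unitmx ->
  ginv [:: 1; 2; 3]%N (A *m B *m C) (invmx C *m X *m invmx A) <-> SS A B X.
Proof.
move=> hA hC.
have iA : invmx A \in unitmx by rewrite unitmx_inv.
have iC : invmx C \in unitmx by rewrite unitmx_inv.
have eMG : A *m B *m C *m (invmx C *m X *m invmx A) = A *m (B *m X) *m invmx A.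
  by rewrite !mulmxA mulmxK.
have e1 : A *m B *m C *m (invmx C *m X *m invmx A) *m (A *m B *m C)
    = A *m (B *m X *m B) *m C.
  by rewrite eMG !mulmxA mulmxKV.
have e2 : invmx C *m X *m invmx A *m (A *m B *m C) *m (invmx C *m X *m invmx A)
    = invmx C *m (X *m B *m X) *m invmx A.
  by rewrite !mulmxA mulmxKV // mulmxK.
rewrite ginv123E /= e1 e2 eMG.
split.
  case=> h1 h2 h3; have h3' := proj1 (@herm_conj _ _ A (B *m X) hA) h3; split; first by apply: (cancel2 hA hC).
  by split=> //; apply: (cancel2 iC iA).
case=> h1 [h2 h3]; split; [by rewrite h1 | by rewrite h2 |].
exact: (proj2 (@herm_conj _ _ A (B *m X) hA)).
Qed.

Lemma S_iff (R : numClosedFieldType) m n (A : 'M[R]_m) (B : 'M[R]_(m,n)) (C : 'M[R]_n) G :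
  A \in unitmx -> C \in unitmx ->
  ginv [:: 1; 2; 3]%N (A *m B *m C) G <-> SS A B (C *m G *m A).
Proof.
move=> hA hC.
have eG : G = invmx C *m (C *m G *m A) *m invmx A.
  by rewrite !mulmxA mulVmx // mul1mx mulmxK.
by rewrite {1}eG S_iffX.
Qed.



Lemma gs (R : numClosedFieldType) p q (B : 'M[R]_(p,q)) X (s1 s2 : seq nat) :
  ginv s2 B X -> all (fun i => i \in s2) s1 -> ginv s1 B X.
Proof. by move=> h /allP hs i hi; apply: h; apply: hs. Qed.

Lemma gcomb (R : numClosedFieldType) p q (B : 'M[R]_(p,q)) X (s1 s2 s : seq nat) :
  ginv s1 B X -> ginv s2 B X -> all (fun i => (i \in s1) || (i \in s2)) s -> ginv s B X.
Proof. by move=> h1 h2 /allP hs i /hs /orP [] hi; [apply: h1 | apply: h2]. Qed.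

Lemma SS12 (R : numClosedFieldType) m n (A : 'M[R]_m) (B : 'M[R]_(m,n)) X :
  SS A B X -> ginv [:: 1; 2]%N B X.
Proof. by case=> h1 [h2 _] i; rewrite !inE => /orP [] /eqP ->. Qed.

Lemma mseteqE T (P Q : T -> Prop) : mseteq P Q <-> msubset P Q /\ msubset Q P.
Proof.
split; first by move=> h; split=> x /h.
by case=> h1 h2 x; split; [apply: h1 | apply: h2].
Qed.

Lemma minn_or (r m n : nat) : (r <= m)%N -> (r <= n)%N -> (r = minn m n <-> r = m \/ r = n).
Proof. move=> h1 h2; lia. Qed.

Lemma K5 (R : numClosedFieldType) m n (A : 'M[R]_m) (B : 'M[R]_(m,n)) D :
  (0 < m)%N -> (0 < n)%N -> A \in unitmx -> ginv [:: 1; 2; 3; 4]%N B D ->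
  (forall X, ginv [:: 1; 4]%N B X -> SS A B X) -> \rank B = m.
Proof.
move=> hm hn hA hD h.
case: (K4 hA hD (fun X hX => h X (gs (s1 := [:: 1; 4]%N) hX isT))) => // hB.
have [_ [h2 _]] := h (const_mx 1) (gs (s1 := [:: 1; 4]%N) (K0 (const_mx 1) hB) isT).
move: h2; rewrite hB mulmx0 mul0mx => /esym /eqP.
by rewrite (negPf (const1_neq0 R hn hm)).
Qed.


Unset Implicit Arguments.
Set Strict Implicit.


Theorem theorem4p2 (R : numClosedFieldType) (m n : nat)
  (A : 'M[R]_m) (B : 'M[R]_(m, n)) (C : 'M[R]_n)
  (hm : (0 < m)%N) (hn : (0 < n)%N)
  (hA : A \in unitmx) (hC : C \in unitmx) :
  let M := A *m B *m C in
  let S123 := ginv [:: 1; 2; 3]%N M in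
  let T idx := tginv idx A B C in
  let R1 := colspace_eq (ctmx A *m A *m B) B in
  (* (33) *)
  (msubset S123 (T [:: 1]%N)
   /\ (msubset (T [:: 1]%N) S123 <-> mseteq S123 (T [:: 1]%N))
   /\ (mseteq S123 (T [:: 1]%N) <-> \rank B = m))
  (* (34) *)
  /\ (msubset S123 (T [:: 1; 2]%N)
   /\ (msubset (T [:: 1; 2]%N) S123 <-> mseteq S123 (T [:: 1; 2]%N))
   /\ (mseteq S123 (T [:: 1; 2]%N) <-> B = 0 \/ \rank B = m))
  (* (35) *)
  /\ ((mmeets S123 (T [:: 1; 3]%N) <-> msubset S123 (T [:: 1; 3]%N))
   /\ (msubset S123 (T [:: 1; 3]%N) <-> R1)
   /\ (msubset (T [:: 1; 3]%N) S123 <-> mseteq S123 (T [:: 1; 3]%N))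
   /\ (mseteq S123 (T [:: 1; 3]%N) <-> R1 /\ \rank B = minn m n))
  (* (36) *)
  /\ (mmeets S123 (T [:: 1; 4]%N)
   /\ (msubset (T [:: 1; 4]%N) S123 <-> \rank B = m)
   /\ (msubset S123 (T [:: 1; 4]%N) <-> B = 0 \/ \rank B = n)
   /\ (mseteq S123 (T [:: 1; 4]%N) <-> \rank B = m /\ m = n))
  (* (37) *)
  /\ ((mmeets S123 (T [:: 1; 2; 3]%N) <-> mseteq S123 (T [:: 1; 2; 3]%N))
   /\ (mseteq S123 (T [:: 1; 2; 3]%N) <-> R1))
  (* (38) *)
  /\ (mmeets S123 (T [:: 1; 2; 4]%N)
   /\ (msubset (T [:: 1; 2; 4]%N) S123 <-> B = 0 \/ \rank B = m)
   /\ (msubset S123 (T [:: 1; 2; 4]%N) <-> B = 0 \/ \rank B = n)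
   /\ (mseteq S123 (T [:: 1; 2; 4]%N) <-> B = 0 \/ (\rank B = m /\ m = n)))
  (* (39) *)
  /\ ((mmeets S123 (T [:: 1; 3; 4]%N) <-> R1)
   /\ (msubset (T [:: 1; 3; 4]%N) S123 <-> R1 /\ \rank B = minn m n)
   /\ (msubset S123 (T [:: 1; 3; 4]%N) <-> B = 0 \/ (R1 /\ \rank B = n))
   /\ (mseteq S123 (T [:: 1; 3; 4]%N) <-> R1 /\ \rank B = n))
  (* (40) *)
  /\ (forall Bd : 'M[R]_(n, m), ginv [:: 1; 2; 3; 4]%N B Bd ->
        (S123 (invmx C *m Bd *m invmx A) <-> R1)).
Proof.
move=> M S123 T R1.
pose f := fun G : 'M[R]_(n,m) => C *m G *m A.
have hS : forall G, S123 G <-> SS A B (f G) by move=> G; apply: S_iff.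
have hT : forall idx G, T idx G <-> ginv idx B (f G) by move=> idx G; apply: T_iff.
have fg : forall X, f (invmx C *m X *m invmx A) = X.
  by move=> X; rewrite /f !mulmxA mulmxV // mul1mx mulmxKV.
have [D hD] := mp_exists B.
have hR1 : R1 <-> R1p A B D by apply: R1E.
have [Ed hEd] := mp_exists (A *m B).
have [hSE hTE] := E_good hA hEd.
set E := Ed *m A in hSE hTE.
have rm := rank_leq_row B; have rn := rank_leq_col B.
refine (conj _ (conj _ (conj _ (conj _ (conj _ (conj _ (conj _ _))))))).
- rewrite (tr_sub hS (hT _) fg) (tr_sub (hT _) hS fg) (tr_eq hS (hT _) fg) mseteqE.
  have s1 : msubset (SS A B) (ginv [:: 1%N] B) by move=> X /SS12 hX; by apply: (gs hX).
  split=> //; split; first by split=> [h|[]].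
  split=> [[_ h]|hr]; last by split=> // X hX; apply: K2.
  by apply: (K5 hm hn hA hD) => X hX; apply: h; by apply: (gs hX).
- rewrite (tr_sub hS (hT _) fg) (tr_sub (hT _) hS fg) (tr_eq hS (hT _) fg) mseteqE.
  have s12 : msubset (SS A B) (ginv [:: 1; 2]%N B) by move=> X /SS12.
  split=> //; split; first by split=> [h|[]].
  split=> [[_ h]|[hB|hr]].
  + by apply: (K4 hA hD) => X hX; apply: h; by apply: (gs hX).
  + by split=> // X hX; apply: K3.
  + by split=> // X hX; apply: K2 => //; by apply: (gs hX).
- rewrite (tr_meet hS (hT _) fg) (tr_sub hS (hT _) fg) (tr_sub (hT _) hS fg) (tr_eq hS (hT _) fg) mseteqE hR1.
  have hR : msubset (SS A B) (ginv [:: 1; 3]%N B) <-> R1p A B D.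
    split=> [h|r X hX]; first exact: (K6 hD hSE (h _ hSE)).
    by apply: (gs (K7b hA hD r hX)).
  rewrite hR.
  split; [split=> [[X [h1 h2]]|r]|split=> //; split].
  + exact: (K6 hD h1 h2).
  + by exists E; split=> //; by apply: (gs (K7b hA hD r hSE)).
  + split=> [h|[]//]; split=> //; exact: (K6 hD (h D (gs (s1 := [:: 1;3]%N) hD isT)) (gs (s1 := [:: 1;3]%N) hD isT)).
  + split=> [[r h]|[r hmin]].
      split=> //; apply: (iffRL (minn_or rm rn)); apply: (K10 hD) => X hX; apply: h; by apply: (gs hX).
    split=> // X hX; apply: (K9 hD r) => //; exact: (iffLR (minn_or rm rn) hmin).
- rewrite (tr_meet hS (hT _) fg) (tr_sub hS (hT _) fg) (tr_sub (hT _) hS fg) (tr_eq hS (hT _) fg) mseteqE.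
  have hA14 : msubset (ginv [:: 1; 4]%N B) (SS A B) <-> \rank B = m.
    split=> [h|r X hX]; first exact: (K5 hm hn hA hD h).
    apply: K2 => //; by apply: (gs hX).
  have hB14 : msubset (SS A B) (ginv [:: 1; 4]%N B) <-> B = 0 \/ \rank B = n.
    split=> [h|c X hX]; [exact: (K11 hA h) | exact: (K12 c hX)].
  split; first by exists E; split=> //; by apply: (gs hTE).
  rewrite hA14 hB14; split=> //; split=> //.
  split=> [[[hB|hr] r]|[r e]].
  + by exfalso; rewrite hB mxrank0 in r; move: hm; rewrite -r.
  + by split=> //; exact: (etrans (esym r) hr).
  + by split=> //; right; exact: (etrans r e).
- rewrite (tr_meet hS (hT _) fg) (tr_eq hS (hT _) fg) mseteqE hR1.
  have hR37 : (msubset (SS A B) (ginv [:: 1; 2; 3]%N B) /\ msubset (ginv [:: 1; 2; 3]%N B) (SS A B)) <-> R1p A B D.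
    split=> [[_ h]|r]; first exact: (K6 hD (h D (gs (s1 := [:: 1;2;3]%N) hD isT)) (gs (s1 := [:: 1;3]%N) hD isT)).
    by split=> X hX; [exact: (K7b hA hD r hX) | exact: (K8 hD r hX)].
  rewrite hR37; split=> //; split=> [[X [h1 h2]]|r]; first exact: (K6 hD h1 (gs (s1 := [:: 1;3]%N) h2 isT)).
  by exists E; split=> //; exact: (K7b hA hD r hSE).
- rewrite (tr_meet hS (hT _) fg) (tr_sub hS (hT _) fg) (tr_sub (hT _) hS fg) (tr_eq hS (hT _) fg) mseteqE.
  have hA124 : msubset (ginv [:: 1; 2; 4]%N B) (SS A B) <-> B = 0 \/ \rank B = m.
    split=> [h|[hB|r] X hX]; first exact: (K4 hA hD h).
    + apply: K3 => //; by apply: (gs hX).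
    + apply: K2 => //; by apply: (gs hX).
  have hB124 : msubset (SS A B) (ginv [:: 1; 2; 4]%N B) <-> B = 0 \/ \rank B = n.
    split=> [h|c X hX]; first by apply: (K11 hA) => X hX; by apply: (gs (h X hX)).
    by apply: (gcomb (SS12 hX) (K12 c hX)).
  split; first by exists E.
  rewrite hA124 hB124; split=> //; split=> //.
  split=> [[[hB|hn'] [hB'|hm']]|[hB|[r e]]]; try by left.
  + by right; split=> //; exact: (etrans (esym hm') hn').
  + by split; left.
  + by split; right => //; exact: (etrans r e).
- rewrite (tr_meet hS (hT _) fg) (tr_sub hS (hT _) fg) (tr_sub (hT _) hS fg) (tr_eq hS (hT _) fg) mseteqE hR1.
  have hA134 : msubset (ginv [:: 1; 3; 4]%N B) (SS A B) <-> R1p A B D /\ \rank B = minn m n.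
    split=> [h|[r hmin] X hX].
      split; first exact: (K6 hD (h D (gs (s1 := [:: 1;3;4]%N) hD isT)) (gs (s1 := [:: 1;3]%N) hD isT)).
      by apply: (iffRL (minn_or rm rn)); exact: (K10 hD h).
    apply: (K9 hD r); [exact: (iffLR (minn_or rm rn) hmin) | by apply: (gs hX)].
  have hB134 : msubset (SS A B) (ginv [:: 1; 3; 4]%N B) <-> B = 0 \/ (R1p A B D /\ \rank B = n).
    split=> [h|[hB|[r hr]] X hX].
      case: (K11 hA (fun X hX => (gs (s1 := [:: 1;4]%N) (h X hX) isT))) => [hB|hr]; first by left.
      right; split=> //; exact: (K6 hD hSE (gs (s1 := [:: 1;3]%N) (h _ hSE) isT)).
    + exact: K0.
    + by apply: (gcomb (K7b hA hD r hX) (K12 (or_intror hr) hX)).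
  split.
    split=> [[X [h1 h2]]|r]; first exact: (K6 hD h1 (gs (s1 := [:: 1;3]%N) h2 isT)).
    by exists D; split; [exact: (K7 hD r) | by apply: (gs hD)].
  rewrite hA134 hB134; split=> //; split=> //.
  split=> [[[hB|//] [_ hmin]]|[r hr]].
    by move: hmin; rewrite hB mxrank0; lia.
  split; [by right | split => //; apply: (iffRL (minn_or rm rn)); by right].
- move=> Bd hBd; rewrite hS fg hR1; split=> [h|r].
  + exact: (K6 hD h (gs (s1 := [:: 1;3]%N) hBd isT)).
  + exact: (K8 hD r (gs (s1 := [:: 1;2;3]%N) hBd isT)).
Qed.
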